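(* There exist measurable subsets \(A\subset\mathbb{R}^{\mathbb{N}}\) that are atoms for \(\mu\).
   Context: Let $\mathcal{B}$ be the Borel $\sigma$-algebra of $\mathbb{R}$, $\lambda$ the Lebesgue measure, and $\mathcal{B}_{\infty}$ the $\sigma$-algebra on $\mathbb{R}^{\mathbb{N}}$ generated by the cylinder sets $\prod_{i=1}^{m}C_{i}\times\prod_{i=m+1}^{\infty}\mathbb{R}$ with $C_i\in\mathcal{B}$, $m\in\mathbb{N}$. Let $\mathcal{F}(\mathcal{B},\lambda)$ be the set of finite rectangles $\prod_{i\in\mathbb{N}}C_{i}$ with $C_i\in\mathcal{B}$ and $\prod_{i}\lambda(C_i)\in[0,\infty)$, with $\mathrm{vol}(\prod_{i}C_i):=\prod_i\lambda(C_i)$. The measure $\mu$ is the restriction to $\mathcal{B}_{\infty}$ of the outer measure $\mu^{\ast}(A):=\inf\{\sum_{n}\mathrm{vol}(\mathscr{C}_{n}) : \mathscr{C}_{n}\in\mathcal{F}(\mathcal{B},\lambda),\ A\subset\bigcup_{n}\mathscr{C}_{n}\}$ ($\inf\varnothing=\infty$). A measurable set $A$ with $\mu(A)>0$ is an atom if every measurable $B\subset A$ satisfies $\mu(B)\in\{0,\mu(A)\}$. *)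

(* Defs.v *)
From HB Require Import structures.
From mathcomp Require Import all_boot all_order all_algebra.
From mathcomp Require Import all_classical all_reals all_analysis.
Set Implicit Arguments. Unset Strict Implicit. Unset Printing Implicit Defensive.
Import Order.TTheory GRing.Theory Num.Theory.
Import numFieldNormedType.Exports.
Local Open Scope classical_set_scope.
Local Open Scope ring_scope.

Section Defs.
Variable R : realType.

Definition cylinder (A : set (nat -> R)) : Prop :=
  exists (m : nat) (C : nat -> set R),
    (forall i, measurable (C i)) /\
    A = [set x | forall i, (i < m)%N -> C i (x i)].

Definition Binf_measurable (A : set (nat -> R)) : Prop :=
  <<s cylinder >> A.

Definition rect (C : nat -> set R) : set (nat -> R) :=
  [set x | forall i, C i (x i)].

Definition finrect_vol (C : nat -> set R) (r : R) : Prop :=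
  (forall i, measurable (C i)) /\
  ((fun n : nat => (\prod_(i < n) (lebesgue_measure (C i)))%E) @ \oo --> r%:E)%E.

(* outer measure mu^* : inf of sum of volumes of countable covers by
   finite rectangles (inf of empty set is +oo) *)
Definition mu_star (A : set (nat -> R)) : \bar R :=
  ereal_inf [set s : \bar R | exists (C : nat -> nat -> set R) (r : nat -> R),
      (forall n, finrect_vol (C n) (r n)) /\
      A `<=` \bigcup_n rect (C n) /\
      s = (\sum_(0 <= n <oo) (r n)%:E)%E].

(* mu = restriction of mu^* to B_infinity; atoms of mu *)
Definition mu_atom (A : set (nat -> R)) : Prop :=
  Binf_measurable A /\ (0 < mu_star A)%E /\
  forall B : set (nat -> R), Binf_measurable B -> B `<=` A ->
    mu_star B = 0%E \/ mu_star B = mu_star A.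

End Defs.

(* Main.v *)
Require Import Defs.
From mathcomp Require Import all_boot all_order all_algebra.
From mathcomp Require Import all_classical all_reals all_analysis.
From mathcomp Require Import ring lra zify.
Import Order.TTheory GRing.Theory Num.Theory.
Import numFieldNormedType.Exports.
Local Open Scope classical_set_scope.
Local Open Scope ring_scope.

Lemma tn_real (R : realType) (phi gam : nat -> R) (r : R) :
  (forall i, 0 < phi i) -> (forall i, 0 <= gam i <= phi i) ->
  (forall i, odd i -> gam i <= 4^-1) ->
  (\prod_(i < n) phi i) @[n --> \oo] --> r ->
  (\prod_(i < n) gam i) @[n --> \oo] --> 0.
Proof.
move=> phi0 gp godd cP.
have r0 : 0 <= r.
  rewrite -(cvg_lim _ cP) //; apply: limr_ge; first by apply/cvg_ex; exists r.
  by apply: nearW => n; apply: prodr_ge0 => i _; apply/ltW.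
have [r00|rpos] := eqVneq r 0.
  apply: (@squeeze_cvgr _ _ _ _ (fun=> 0) (fun n => \prod_(i < n) phi i)).
  - apply: nearW => n; apply/andP; split.
      by apply: prodr_ge0 => i _; case/andP: (gp i).
    by apply: ler_prod => i _; exact: gp.
  - exact: cvg_cst.
  - by rewrite -r00.
have {}rpos : 0 < r by rewrite lt_neqAle eq_sym rpos.
pose rho i := gam i / phi i.
have rho01 : forall i, 0 <= rho i <= 1.
  move=> i; case/andP: (gp i) => g0 gl; apply/andP; split.
    by apply: divr_ge0 => //; apply/ltW.
  by rewrite ler_pdivrMr // mul1r.
have eQ : (fun n => \prod_(i < n) gam i) = (fun n => \prod_(i < n) rho i * \prod_(i < n) phi i).
  apply: funext => n; rewrite -big_split /=; apply: eq_bigr => i _.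
  by rewrite /rho divfK // gt_eqF.
rewrite eQ -(mul0r r); apply: cvgM => //.
have [N HN] : exists N, forall n, (N <= n)%N -> `|r - \prod_(i < n) phi i| < r / 3.
  have := (cvgrPdist_lt _ _).1 cP (r / 3) ltac:(by apply: divr_gt0).
  by case=> N _ HN; exists N => n Nn; apply: HN.
have rhoh : forall i, (N <= i)%N -> odd i -> rho i <= 2^-1.
  move=> i Ni oi.
  have h1 := HN i Ni; have h2 := HN i.+1 (leqW Ni).
  rewrite big_ord_recr /= in h2.
  set P := \prod_(j < i) phi j in h1 h2.
  have P0 : 0 < P by apply: prodr_gt0 => j _.
  have phih : 2^-1 < phi i.
    rewrite ltNge; apply/negP => hle.
    move: h1 h2; rewrite !ltr_norml => /andP[a1 a2] /andP[b1 b2].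
    have : P * phi i <= P * 2^-1 by rewrite ler_pM2l.
    lra.
  have := godd i oi; rewrite /rho ler_pdivrMr //; lra.
have bound : forall k n, (N + k.*2 <= n)%N -> \prod_(i < n) rho i <= 2^-1 ^+ k.
  elim=> [|k IH] n hn.
    by rewrite expr0; apply: prodr_ile1 => i _; exact: rho01.
  case: n hn => [|[|m]] hn; try (exfalso; move: hn; rewrite -!muln2; lia).
  have hm : (N + k.*2 <= m)%N by move: hn; rewrite -!muln2; lia.
  rewrite !big_ord_recr /= -mulrA exprSr.
  have r1 := rho01 m; have r2 := rho01 m.+1.
  have h12 : rho m * rho m.+1 <= 2^-1.
    have Nm : (N <= m)%N by apply: leq_trans hm; exact: leq_addr.
    case/boolP: (odd m) => om.
      have := rhoh m Nm om; move: r1 r2 => /andP[? ?] /andP[? ?]; nra.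
    have o1 : odd m.+1 by rewrite /= om.
    have := rhoh m.+1 (leqW Nm) o1; move: r1 r2 => /andP[? ?] /andP[? ?]; nra.
  apply: ler_pM => //.
  - by apply: prodr_ge0 => i _; case/andP: (rho01 i).
  - by apply: mulr_ge0; [case/andP: r1|case/andP: r2].
  - exact: IH.
apply/cvgrPdist_lt => e e0.
have [k hk] : exists k, (2^-1 : R) ^+ k < e.
  have h2 : `|(2^-1 : R)| < 1 by rewrite ger0_norm; lra.
  have := (cvgrPdist_lt _ _).1 (@cvg_expr R 2^-1 h2) e e0.
  move=> /(_ _)/filter_ex [k] /=; rewrite sub0r normrN ger0_norm; first by exists k.
  by apply: exprn_ge0; lra.
near=> n.
rewrite sub0r normrN ger0_norm; last by apply: prodr_ge0 => i _; case/andP: (rho01 i).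
apply: le_lt_trans hk; apply: bound.
near: n; exact: nbhs_infty_ge.
Unshelve. all: end_near.
Qed.

Lemma prod_fin (R : realType) (f : nat -> \bar R) (r : R) :
  (forall i, 0 < f i)%E ->
  ((\prod_(i < n) f i)%E @[n --> \oo] --> r%:E) ->
  forall j, (f j < +oo)%E.
Proof.
move=> fpos /fine_cvgP [hfin _] j.
rewrite ltNge leye_eq; apply/negP => /eqP fj.
have : \forall n \near \oo, (j < n)%N /\ (\prod_(i < n) f i)%E \is a fin_num.
  near=> n; split; [near: n; exact: nbhs_infty_gt | near: n; exact: hfin].
move=> /filter_ex [n [jn]].
rewrite (bigD1 (Ordinal jn)) //= fj gt0_mulye //.
apply: (big_ind (fun x => 0 < x)%E) => //.
  by move=> x y; apply: mule_gt0.
Unshelve. all: end_near.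
Qed.

Lemma tn_ereal (R : realType) (f g : nat -> \bar R) (r : R) :
  (forall i, 0 <= f i)%E -> (forall i, 0 <= g i <= f i)%E ->
  (forall i, odd i -> g i <= (4^-1)%:E)%E ->
  ((\prod_(i < n) f i)%E @[n --> \oo] --> r%:E) ->
  ((\prod_(i < n) g i)%E @[n --> \oo] --> 0%:E).
Proof.
move=> f0 gf godd cf.
case: (pselect (exists j, f j = 0)) => [[j fj0]|nz].
  apply: cvg_near_cst; near=> n.
  have jn : (j < n)%N by near: n; exact: nbhs_infty_gt.
  have gj0 : g j = 0.
    by case/andP: (gf j) => g0 gl; apply/eqP; rewrite eq_le g0 andbT -fj0.
  by rewrite (bigD1 (Ordinal jn)) //= gj0 mul0e.
have fpos : forall i, (0 < f i)%E.
  move=> i; rewrite lt0e f0 andbT; apply/eqP => h; apply: nz; by exists i.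
have ffin := @prod_fin R f r fpos cf.
have ef : forall i, f i = (fine (f i))%:E.
  by move=> i; rewrite fineK // ge0_fin_numE.
have eg : forall i, g i = (fine (g i))%:E.
  move=> i; case/andP: (gf i) => g0 gl.
  by rewrite fineK // ge0_fin_numE //; apply: le_lt_trans gl _.
have ePf : (fun n => \prod_(i < n) f i)%E = (fun n => (\prod_(i < n) fine (f i))%:E).
  by apply: funext => n; rewrite -prodEFin; apply: eq_bigr => i _; rewrite -ef.
have ePg : (fun n => \prod_(i < n) g i)%E = (fun n => (\prod_(i < n) fine (g i))%:E).
  by apply: funext => n; rewrite -prodEFin; apply: eq_bigr => i _; rewrite -eg.
rewrite ePg; apply: cvg_EFin; first by apply: nearW.
rewrite ePf in cf; move/fine_cvgP: cf => [_ cf].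
apply: (@tn_real R (fun i => fine (f i)) (fun i => fine (g i)) r).
- by move=> i; have := fpos i; rewrite ef lte_fin.
- move=> i; have := gf i; rewrite (ef i) (eg i) !lee_fin => /andP[-> ->]; by [].
- move=> i oi; have := godd i oi; rewrite (eg i) lee_fin; by [].
- exact: cf.
Unshelve. all: end_near.
Qed.

Definition Dset (R : realType) (i : nat) : set R :=
  if odd i then (`[0, 4^-1]%classic : set R) else [set: R].

Lemma Dset_meas (R : realType) i : measurable (Dset R i).
Proof. by rewrite /Dset; case: odd => //; exact: measurable_itv. Qed.

Lemma lam14 (R : realType) : lebesgue_measure (`[0, 4^-1] : set R) = (4^-1)%:E.
Proof.
rewrite lebesgue_measure_itv /= lte_fin invr_gt0 ltr0n /=.
by rewrite oppr0 adde0.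
Qed.

Lemma nocover (R : realType) (C : nat -> nat -> set R) (r : nat -> R) :
  (forall n, finrect_vol (C n) (r n)) ->
  ~ (rect (Dset R) `<=` \bigcup_n rect (C n)).
Proof.
move=> hC hcov.
have mC : forall n i, measurable (C n i) by move=> n i; exact: (hC n).1.
pose Z i m := if lebesgue_measure (C m i) == 0 then C m i else set0.
pose Nn i := \bigcup_m Z i m.
pose E i := if odd i then set0
            else if (lebesgue_measure (C i./2 i) < +oo)%E then C i./2 i else set0.
have mZ : forall i m, measurable (Z i m).
  by move=> i m; rewrite /Z; case: eqP => _ //; exact: mC.
have mN : forall i, measurable (Nn i).
  by move=> i; apply: bigcup_measurable => m _; exact: mZ.
have mE : forall i, measurable (E i).
  by move=> i; rewrite /E; case: odd => //; case: ifP => _ //; exact: mC.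
have N0 : forall i, lebesgue_measure (Nn i) = 0.
  move=> i; apply/eqP; rewrite eq_le measure_ge0 andbT.
  apply: le_trans (@measure_sigma_subadditive _ _ _ lebesgue_measure (Nn i) (Z i) (mZ i) (mN i) (@subset_refl _ _)) _.
  rewrite eseries0 // => m _ _; rewrite /Z; case: eqP => // _; exact: measure0.
have Efin : forall i, (lebesgue_measure (E i) < +oo)%E.
  move=> i; rewrite /E; case: odd; first by rewrite measure0.
  by case: ifP => // _; rewrite measure0.
have ex : forall i, exists y, Dset R i y /\ ~ Nn i y /\ ~ E i y.
  move=> i; apply: contrapT => hne.
  have sub : Dset R i `<=` Nn i `|` E i.
    move=> y Dy; apply: contrapT => hy; apply: hne; exists y; split => //.
    by split => h; apply: hy; [left|right].
  have := @le_measure _ _ _ lebesgue_measure _ _ (mem_set (Dset_meas R i)) (mem_set (measurableU _ _ (mN i) (mE i))) sub.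
  have := measureU2 lebesgue_measure (mN i) (mE i).
  move=> h1 h2; have h : (lebesgue_measure (Dset R i) <= lebesgue_measure (Nn i) + lebesgue_measure (E i))%E by exact: le_trans h2 h1.
  rewrite N0 add0e in h.
  move: h (Efin i); rewrite /Dset /E; case: (odd i) => h hf.
    by move: h; rewrite lam14 measure0 lee_fin leNgt invr_gt0 ltr0n.
  have := le_lt_trans h hf.
  have -> : (lebesgue_measure (setT : set R)) = +oo%E.
    by rewrite -set_itvNyy lebesgue_measure_itv.
  by rewrite ltxx.
case: (choice ex) => x hx.
have xA : rect (Dset R) x by move=> i; case: (hx i).
have [n _ hxn] := hcov x xA.
case: (pselect (exists i, lebesgue_measure (C n i) = 0)) => [[i hi]|hnz].
  case: (hx i) => _ [hN _]; apply: hN; exists n => //.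
  by rewrite /Z hi eqxx; exact: hxn.
have fpos : forall i, (0 < lebesgue_measure (C n i))%E.
  move=> i; rewrite lt0e measure_ge0 andbT; apply/eqP => h; apply: hnz; by exists i.
have fin := @prod_fin R (fun i => lebesgue_measure (C n i)) (r n) fpos (hC n).2 n.*2.
case: (hx n.*2) => _ [_ hE]; apply: hE.
by rewrite /E odd_double doubleK fin; exact: hxn.
Qed.

Lemma rect_meas (R : realType) : Binf_measurable (rect (Dset R)).
Proof.
rewrite /Binf_measurable.
have cyl : forall k, <<s (@cylinder R) >> [set x | Dset R k (x k)].
  move=> k; apply: sub_sigma_algebra.
  exists k.+1, (fun i => if i == k then Dset R k else setT); split.
    by move=> i; case: eqP => _; [exact: Dset_meas | exact: measurableT].
  apply/seteqP; split => x /=.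
    by move=> hx i _; case: eqP => [->|].
  by move=> hx; have := hx k (ltnSn k); rewrite eqxx.
have -> : rect (Dset R) = ~` \bigcup_k ~` [set x | Dset R k (x k)].
  apply/seteqP; split => x /=.
    by move=> hx [k _]; apply; exact: hx k.
  by move=> hx k; apply: contrapT => hk; apply: hx; exists k.
apply: sigma_algebraC.
case: (smallest_sigma_algebra setT (@cylinder R)) => _ _ hU.
by apply: hU => k; apply: sigma_algebraC; exact: cyl k.
Qed.

Theorem propositionA2 (R : realType) :
  exists A : set (nat -> R), mu_atom A.
Proof.
exists (rect (Dset R)).
have muA : mu_star (rect (Dset R)) = +oo%E.
  rewrite /mu_star; set S := [set s | _].
  have -> : S = set0.
    apply/seteqP; split => s //= [C [r [hC [hcov _]]]]; exact: (@nocover R C r hC hcov).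
  by rewrite ereal_inf0.
split; first exact: rect_meas.
split; first by rewrite muA.
move=> B _ BA.
case: (pselect (exists (C : nat -> nat -> set R) (r : nat -> R), (forall n, finrect_vol (C n) (r n)) /\
   B `<=` \bigcup_n rect (C n))) => [[C [r [hC hB]]]|nc]; last first.
  right; rewrite muA /mu_star; set S := [set s | _].
  have -> : S = set0.
    apply/seteqP; split => s //= [C [r [hC [hcov _]]]]; apply: nc; by exists C, r.
  by rewrite ereal_inf0.
left; apply/eqP; rewrite eq_le; apply/andP; split.
  rewrite /mu_star; apply: ge_ereal_inf; exists 0%E; last by [].
  rewrite /=.
  exists (fun n (i : nat) => C n i `&` Dset R i), (fun _ : nat => (0 : R)); split; [|split].
  - move=> n; split.
      by move=> i; apply: measurableI; [exact: (hC n).1 | exact: Dset_meas].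
    apply (@tn_ereal R (fun i => lebesgue_measure (C n i)) (fun i => lebesgue_measure (C n i `&` Dset R i)) (r n)); last exact: (hC n).2.
    + by move=> i; exact: measure_ge0.
    + move=> i; rewrite measure_ge0 /=.
      apply: le_measure; rewrite ?inE; [|exact: (hC n).1 i|exact: subIsetl].
      by apply: measurableI; [exact: (hC n).1 | exact: Dset_meas].
    + move=> i oi; rewrite -(lam14 R).
      have -> : (`[0, 4^-1]%classic : set R) = Dset R i by rewrite /Dset oi.
      apply: le_measure; rewrite ?inE; [|exact: Dset_meas|exact: subIsetr].
      by apply: measurableI; [exact: (hC n).1 | exact: Dset_meas].
  - move=> x Bx; have [n _ hx] := hB x Bx; exists n => // i; split.
      exact: hx.
    exact: BA _ Bx i.
  - by rewrite eseries0.
apply/ereal_infP => y [C' [r' [h1 [_ ->]]]]; apply: nneseries_ge0 => n _ _.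
rewrite lee_fin.
have := (h1 n).2; move/fine_cvgP => [_ c].
rewrite -(cvg_lim _ c) //; apply: limr_ge; first by apply/cvg_ex; exists (r' n).
apply: nearW => k /=; apply: fine_ge0; apply: prode_ge0 => i _; exact: measure_ge0.
Qed.
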